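(* Let $\ell\in\mathbb{F}$ and $\lambda\in\Lambda$, and let $(W,Y_W)$ be a module for the vertex algebra $L_{\widehat{\mathfrak h}}(\ell,0,\lambda)$. Then $W$ is a restricted $\widehat{\mathfrak h}$-module of level $\ell$, where $u(n)$ acts as the coefficient of $x^{-n-1}$ in $Y_W(\bar u,x)$, with $\bar u$ the image of $u(-1)\mathbf 1$ in $L_{\widehat{\mathfrak h}}(\ell,0,\lambda)$. Moreover, for every $u\in\mathfrak h$: <ol> <li>$u(n)$ acts as $0$ on $W$ for all $n\in p\mathbb{Z}$;</li> <li>$u(n)^p$ acts as $0$ on $W$ for all $n\in\mathbb{Z}$ with $n\neq-1$;</li> <li>$u(-1)^p$ acts on $W$ as the scalar $\lambda(u(-1))^p$.</li> </ol>
   Context: Let $p$ be a prime and $\mathbb{F}$ a field of characteristic $p$. Integers, and binomial coefficients $\binom{n}{k}=\frac{n(n-1)\cdots(n-k+1)}{k!}$ for $n\in\mathbb{Z}$, $k\in\mathbb{N}$, are viewed as elements of the prime subfield of $\mathbb{F}$. We write $\mathbb{Z}_+$ for the positive integers. <b>Formal calculus.</b> For every $n\in\mathbb{Z}$ set $(x+y)^n=\sum_{k\ge0}\binom{n}{k}x^{n-k}y^k$, and let $\delta(x)=\sum_{n\in\mathbb{Z}}x^n$. <b>Vertex algebras.</b> A vertex algebra over $\mathbb{F}$ is a vector space $V$ with a vector $\mathbf 1$ and a linear map $$Y(\cdot,x):V\to(\mathrm{End}\,V)[[x,x^{-1}]],\qquad v\mapsto Y(v,x)=\sum_{n\in\mathbb{Z}}v_nx^{-n-1},$$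 satisfying the following conditions for all $u,v\in V$: <ul> <li>$u_nv=0$ for $n\gg0$;</li> <li>$Y(\mathbf 1,x)=\mathrm{id}_V$;</li> <li>$Y(v,x)\mathbf 1\in V[[x]]$ and its constant term is $v$;</li> <li>the Jacobi identity $$x_0^{-1}\delta\!\left(\tfrac{x_1-x_2}{x_0}\right)Y(u,x_1)Y(v,x_2)-x_0^{-1}\delta\!\left(\tfrac{x_2-x_1}{-x_0}\right)Y(v,x_2)Y(u,x_1)=x_2^{-1}\delta\!\left(\tfrac{x_1-x_0}{x_2}\right)Y(Y(u,x_0)v,x_2).$$</li> </ul> A $V$-module is a vector space $W$ with a linear map $Y_W(\cdot,x):V\to(\mathrm{End}\,W)[[x,x^{-1}]]$ satisfying truncation ($u_nw=0$ for $n\gg0$), $Y_W(\mathbf 1,x)=\mathrm{id}_W$, and the same Jacobi identity with $Y_W$ in place of $Y$ in the three products of vertex operators. <b>Heisenberg setup.</b> Let $\mathfrak h$ be a finite-dimensional $\mathbb{F}$-vector space with a non-degenerate symmetric bilinear form $\langle\cdot,\cdot\rangle$. The affine Lie algebra is $\widehat{\mathfrak h}=\mathfrak h\otimes\mathbb{F}[t,t^{-1}]\oplus\mathbb{F}\mathbf k$, where $\mathbf k$ is central and, writing $u(m)=u\otimes t^m$, $$[u(m),v(n)]=m\,\delta_{m+n,0}\langle u,v\rangle\mathbf k.$$ Set $\widehat{\mathfrak h}_+=\bigoplus_{n>0}\mathfrak h\otimes t^{-n}$ and $\widehat{\mathfrak h}_-=\bigoplus_{n>0}\mathfrak h\otimes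 t^{n}$. For a linear functional $\lambda\in(\widehat{\mathfrak h}_+)^*$, write $\lambda_n(u)=\lambda(u(-n))$ for $u\in\mathfrak h$, $n\in\mathbb{Z}_+$. <b>Restricted modules and level.</b> An $\widehat{\mathfrak h}$-module $W$ is restricted if for all $u\in\mathfrak h$ and $w\in W$ we have $u(n)w=0$ for $n\gg0$. It has level $\ell\in\mathbb{F}$ if $\mathbf k$ acts as the scalar $\ell$. <b>The vertex algebra $V_{\widehat{\mathfrak h}}(\ell,0)$.</b> For $\ell\in\mathbb{F}$, let $$V_{\widehat{\mathfrak h}}(\ell,0)=U(\widehat{\mathfrak h})\otimes_{U(\widehat{\mathfrak h}_-\oplus\mathfrak h\oplus\mathbb{F}\mathbf k)}\mathbb{F}_\ell,$$ where $\widehat{\mathfrak h}_-$ and $\mathfrak h=\mathfrak h\otimes t^0$ act on $\mathbb{F}_\ell=\mathbb{F}$ by $0$ and $\mathbf k$ acts by $\ell$. Set $\mathbf 1=1\otimes1$ and identify $u\in\mathfrak h$ with $u(-1)\mathbf 1$. Then $V_{\widehat{\mathfrak h}}(\ell,0)$ is a vertex algebra with vacuum $\mathbf 1$, uniquely determined by $Y(u,x)=\sum_{n\in\mathbb{Z}}u(n)x^{-n-1}$ for $u\in\mathfrak h$. <b>The quotients $L_{\widehat{\mathfrak h}}(\ell,0,\lambda)$.</b> For $\lambda\in(\widehat{\mathfrak h}_+)^*$, let $J(\ell,\lambda)$ be the $\widehat{\mathfrak h}$-submodule of $V_{\widehat{\mathfrak h}}(\ell,0)$ generated by the vectors <ul>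 <li>$(u(-m)^p-\lambda_m(u)^p)\mathbf 1$ for $u\in\mathfrak h$, $m\in\mathbb{Z}_+$;</li> <li>$(u(-n)-\lambda_n(u))\mathbf 1$ for $u\in\mathfrak h$, $n\in p\mathbb{Z}_+$.</li> </ul> Put $L_{\widehat{\mathfrak h}}(\ell,0,\lambda)=V_{\widehat{\mathfrak h}}(\ell,0)/J(\ell,\lambda)$, and $$\Lambda=\{\lambda\in(\widehat{\mathfrak h}_+)^*:\ \lambda(u(-n))=0\ \text{for all }u\in\mathfrak h,\ n\ge2\}.$$ For $\lambda\in\Lambda$, $J(\ell,\lambda)$ is an ideal, so $L_{\widehat{\mathfrak h}}(\ell,0,\lambda)$ is a quotient vertex algebra. *)

(* Defs.v *)
From HB Require Import structures.
From mathcomp Require Import all_boot all_order all_algebra.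
Set Implicit Arguments. Unset Strict Implicit. Unset Printing Implicit Defensive.
Import Order.TTheory GRing.Theory Num.Theory.
Local Open Scope ring_scope.

(* Binomial coefficient binom(m, i) = m(m-1)...(m-i+1)/i! for m : int. *)
Definition zbinom (m : int) (i : nat) : int :=
  match m with
  | Posz n => ('C(n, i))%:Z
  | Negz n => (-1) ^+ i * ('C(n + i, i))%:Z   (* Negz n = -(n+1) *)
  end.

(* A "vertex operator" map v |-> Y(v,x) = sum_n v_n x^{-n-1} is encoded by its
   modes: Y v n w = v_n w. *)

Definition va_linear (F : fieldType) (V W : lmodType F)
  (Y : V -> int -> W -> W) : Prop :=
  (forall (a : F) (u v : V) (n : int) (w : W),
      Y (a *: u + v) n w = a *: Y u n w + Y v n w) /\
  (forall (u : V) (n : int) (a : F) (w w' : W),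
      Y u n (a *: w + w') = a *: Y u n w + Y u n w').

Definition va_truncation (F : fieldType) (V W : lmodType F)
  (Y : V -> int -> W -> W) : Prop :=
  forall (u : V) (w : W), exists N : int, forall n : int, N <= n -> Y u n w = 0.

Definition va_vacuum (F : fieldType) (V W : lmodType F) (vac : V)
  (Y : V -> int -> W -> W) : Prop :=
  forall (n : int) (w : W), Y vac n w = if n == -1 then w else 0.

Definition va_creation (F : fieldType) (V : lmodType F) (vac : V)
  (Y : V -> int -> V -> V) : Prop :=
  forall v : V, Y v (-1) vac = v /\ (forall n : int, 0 <= n -> Y v n vac = 0).

(* The Jacobi identity, coefficient of x0^{-k-1} x1^{-m-1} x2^{-n-1}
   (all three sums are finite by truncation; we sum over i < M for all large M):
   sum_i binom(m,i) (u_{k+i} v)_{m+n-i} w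
     = sum_i (-1)^i binom(k,i) (u_{m+k-i} v_{n+i} w - (-1)^k v_{n+k-i} u_{m+i} w). *)
Definition jacobi (F : fieldType) (V W : lmodType F)
  (YV : V -> int -> V -> V) (Y : V -> int -> W -> W) : Prop :=
  forall (u v : V) (w : W) (m n k : int), exists N : nat, forall M : nat, (N <= M)%N ->
    \sum_(i < M) (zbinom m i)%:~R *: Y (YV u (k + (i : nat)%:Z) v) (m + n - (i : nat)%:Z) w
    = \sum_(i < M) ((-1) ^+ i * (zbinom k i)%:~R : F) *:
        (Y u (m + k - (i : nat)%:Z) (Y v (n + (i : nat)%:Z) w)
         - ((-1) ^ k : F) *: Y v (n + k - (i : nat)%:Z) (Y u (m + (i : nat)%:Z) w)).

Definition is_vertex_algebra (F : fieldType) (V : lmodType F) (vac : V)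
  (Y : V -> int -> V -> V) : Prop :=
  [/\ va_linear Y, va_truncation Y, va_vacuum vac Y, va_creation vac Y & jacobi Y Y].

Definition is_va_module (F : fieldType) (V W : lmodType F) (vac : V)
  (Y : V -> int -> V -> V) (YW : V -> int -> W -> W) : Prop :=
  [/\ va_linear YW, va_truncation YW, va_vacuum vac YW & jacobi Y YW].

Definition nondeg_symform (F : fieldType) (h : vectType F) (form : h -> h -> F) : Prop :=
  [/\ (forall (a : F) (u v w : h), form (a *: u + v) w = a * form u w + form v w),
      (forall u v : h, form u v = form v u) &
      (forall u : h, (forall v : h, form u v = 0) -> u = 0)].

(* An hhat-module of level ell on M: act u n is the action of u(n) = u ⊗ t^n,
   and k acts as ell. *)
Definition heis_module (F : fieldType) (h : vectType F) (form : h -> h -> F) (ell : F)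
  (M : lmodType F) (act : h -> int -> M -> M) : Prop :=
  [/\ (forall (a : F) (u v : h) (n : int) (w : M),
          act (a *: u + v) n w = a *: act u n w + act v n w),
      (forall (u : h) (n : int) (a : F) (w w' : M),
          act u n (a *: w + w') = a *: act u n w + act u n w') &
      (forall (u v : h) (m n : int) (w : M),
          act u m (act v n w) - act v n (act u m w)
          = (if m + n == 0 then (m%:~R * form u v * ell) else 0) *: w)].

Definition restricted (F : fieldType) (h : vectType F) (M : lmodType F)
  (act : h -> int -> M -> M) : Prop :=
  forall (u : h) (w : M), exists N : int, forall n : int, N <= n -> act u n w = 0.

(* w is annihilated by hhat_- (= h ⊗ t^n, n > 0) and by h ⊗ t^0 *)
Definition vacuum_like (F : fieldType) (h : vectType F) (M : lmodType F)
  (act : h -> int -> M -> M) (w : M) : Prop :=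
  forall (u : h) (n : int), 0 <= n -> act u n w = 0.

(* Universal property of the induced module U(hhat) ⊗_{U(hhat_- + h + F k)} F_ell,
   generated by vac. *)
Definition induced_universal (F : fieldType) (h : vectType F) (form : h -> h -> F)
  (ell : F) (V : lmodType F) (act : h -> int -> V -> V) (vac : V) : Prop :=
  forall (M : lmodType F) (rho : h -> int -> M -> M) (w : M),
    heis_module form ell rho -> vacuum_like rho w ->
    exists f : V -> M,
      (let P := fun g : V -> M =>
         [/\ (forall (a : F) (x y : V), g (a *: x + y) = a *: g x + g y),
             g vac = w &
             (forall (u : h) (n : int) (x : V), g (act u n x) = rho u n (g x))] in
       P f /\ forall g : V -> M, P g -> forall x : V, g x = f x).

(* (V, vac, Y, iota) is the vertex algebra V_hhat(ell,0), with iota u = u(-1)1 and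
   Y(iota u, x) = sum_n u(n) x^{-n-1}. *)
Definition is_heisenberg_VA (F : fieldType) (h : vectType F) (form : h -> h -> F)
  (ell : F) (V : lmodType F) (vac : V) (Y : V -> int -> V -> V) (iota : h -> V) : Prop :=
  [/\ is_vertex_algebra vac Y,
      (forall u : h, iota u = Y (iota u) (-1) vac),
      heis_module form ell (fun u n => Y (iota u) n) &
      induced_universal form ell (fun u n => Y (iota u) n) vac].

(* membership in J(ell, lambda): the hhat-submodule generated by the listed vectors *)
Definition in_J (F : fieldType) (h : vectType F) (p : nat) (lam : nat -> h -> F)
  (V : lmodType F) (vac : V) (act : h -> int -> V -> V) (x : V) : Prop :=
  forall P : V -> Prop,
    P 0 -> (forall (a : F) (y z : V), P y -> P z -> P (a *: y + z)) ->
    (forall (u : h) (m : nat), (0 < m)%N ->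
        P (iter p (act u (- (m%:Z))) vac - (lam m u) ^+ p *: vac)) ->
    (forall (u : h) (n : nat), (0 < n)%N -> (p %| n)%N ->
        P (act u (- (n%:Z)) vac - lam n u *: vac)) ->
    (forall (u : h) (n : int) (y : V), P y -> P (act u n y)) ->
    P x.

Definition is_va_quotient (F : fieldType) (V L : lmodType F) (vac : V)
  (Y : V -> int -> V -> V) (vacL : L) (YL : L -> int -> L -> L) (pi : V -> L)
  (J : V -> Prop) : Prop :=
  is_vertex_algebra vacL YL /\
  (forall (a : F) (x y : V), pi (a *: x + y) = a *: pi x + pi y) /\
  (forall z : L, exists x : V, pi x = z) /\
  pi vac = vacL /\
  (forall (a : V) (n : int) (b : V), pi (Y a n b) = YL (pi a) n (pi b)) /\
  (forall x : V, pi x = 0 <-> J x).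

(* Main.v *)
Require Import Defs.
From HB Require Import structures.
From mathcomp Require Import all_boot all_order all_algebra.
From mathcomp Require zify.
From Stdlib Require Import Lia ClassicalEpsilon FunctionalExtensionality.
Set Implicit Arguments. Unset Strict Implicit. Unset Printing Implicit Defensive.
Import Order.TTheory GRing.Theory Num.Theory.
Local Open Scope ring_scope.

Lemma sum_stable (W : zmodType) (f : nat -> W) (N M : nat) :
  (N <= M)%N -> (forall i, (N <= i)%N -> f i = 0) ->
  \sum_(i < M) f i = \sum_(i < N) f i.
Proof.
elim: M => [|M IH] hNM hf; first by move: hNM; rewrite leqn0 => /eqP ->.
have [->//|ne] := eqVneq N M.+1.
rewrite big_ord_recr /= hf ?addr0; last by rewrite -ltnS ltn_neqAle ne hNM.
by apply: IH => //; rewrite -ltnS ltn_neqAle ne hNM.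
Qed.

Definition isum (W : zmodType) (f : nat -> W) : W :=
  match excluded_middle_informative (exists N, forall i, (N <= i)%N -> f i = 0) with
  | left H => \sum_(i < proj1_sig (constructive_indefinite_description _ H)) f i
  | right _ => 0
  end.

Lemma isumE (W : zmodType) (f : nat -> W) (N : nat) :
  (forall i, (N <= i)%N -> f i = 0) -> isum f = \sum_(i < N) f i.
Proof.
move=> hN; rewrite /isum; case: excluded_middle_informative => [H|H]; last first.
  by exfalso; apply: H; exists N.
case: constructive_indefinite_description => K hK /=.
rewrite -(@sum_stable _ f K (maxn K N)) ?leq_maxl //.
rewrite -(@sum_stable _ f N (maxn K N)) ?leq_maxr //.
Qed.

Lemma isumE' (W : zmodType) (f : nat -> W) (N M : nat) :
  (forall i, (N <= i)%N -> f i = 0) -> (N <= M)%N -> isum f = \sum_(i < M) f i.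
Proof. by move=> hN hM; rewrite (isumE hN) (sum_stable hM hN). Qed.

Lemma isum0 (W : zmodType) (f : nat -> W) : (forall i, f i = 0) -> isum f = 0.
Proof. by move=> h; rewrite (@isumE _ _ 0%N) ?big_ord0. Qed.

Lemma bound_fam (n : nat) (Q : nat -> nat -> Prop) :
  (forall t N N', Q t N -> (N <= N')%N -> Q t N') ->
  (forall t, (t < n)%N -> exists N, Q t N) ->
  exists N, forall t, (t < n)%N -> Q t N.
Proof.
move=> hmon; elim: n => [|n IH] h; first by exists 0%N.
have [N1 h1] := IH (fun t ht => h t (ltnW ht)).
have [N2 h2] := h n (ltnSn n).
exists (maxn N1 N2) => t; rewrite ltnS leq_eqVlt => /orP [/eqP ->|ht].
  by apply: hmon h2 _; rewrite leq_maxr.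
by apply: hmon (h1 t ht) _; rewrite leq_maxl.
Qed.

Lemma sum_charp (F : fieldType) (W : lmodType F) (p : nat) (hp : prime p)
  (hc : p \in [pchar F]) (x : nat -> W) :
  \sum_(t < p.+1) x t *+ 'C(p, t) = x 0%N + x p.
Proof.
case: p hp hc => [//|p] hp hc.
rewrite big_ord_recr /= binn big_ord_recl /= bin0 !mulr1n.
rewrite big1 ?addr0 // => i _.
rewrite -scaler_nat bin_lt_pcharf_0 ?scale0r //.
apply/andP; split=> //; have := ltn_ord i; rewrite /bump /=; lia.
Qed.
Lemma binom_ops (W : zmodType) (good : (int -> W -> W) -> Prop)
  (Y Z : (int -> W -> W) -> int -> W -> W) (G0 : int -> W -> W) :
  good G0 -> (forall G, good G -> good (Y G)) -> (forall G, good G -> good (Z G)) ->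
  (forall n (H : nat -> int -> W -> W) (c : nat -> nat), (forall t, good (H t)) ->
    Y (fun q w => \sum_(t < n) H t q w *+ c t) = fun q w => \sum_(t < n) Y (H t) q w *+ c t) ->
  (forall n (H : nat -> int -> W -> W) (c : nat -> nat), (forall t, good (H t)) ->
    Z (fun q w => \sum_(t < n) H t q w *+ c t) = fun q w => \sum_(t < n) Z (H t) q w *+ c t) ->
  (forall G, good G -> Y (Z G) = Z (Y G)) ->
  forall k, iter k (fun G q w => Y G q w + Z G q w) G0
    = fun q w => \sum_(t < k.+1) iter t Y (iter (k - t) Z G0) q w *+ 'C(k, t).
Proof.
move=> g0 gY gZ Ysum Zsum YZ.
have gYi : forall t G, good G -> good (iter t Y G).
  by move=> t G hG; elim: t => [|t IH] //=; apply: gY.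
have gZi : forall t G, good G -> good (iter t Z G).
  by move=> t G hG; elim: t => [|t IH] //=; apply: gZ.
have comm : forall t G, good G -> Z (iter t Y G) = iter t Y (Z G).
  move=> t G hG; elim: t => [|t IH] //=; by rewrite -YZ ?IH //; apply: gYi.
elim=> [|k IH].
  apply: functional_extensionality => q; apply: functional_extensionality => w.
  by rewrite /= big_ord1 /= mulr1n.
rewrite iterS IH.
rewrite (Ysum _ (fun t => iter t Y (iter (k - t) Z G0))); last by move=> t; apply/gYi/gZi.
rewrite (Zsum _ (fun t => iter t Y (iter (k - t) Z G0))); last by move=> t; apply/gYi/gZi.
apply: functional_extensionality => q; apply: functional_extensionality => w.
set X := fun t => iter t Y (iter (k.+1 - t) Z G0) q w.
have e1 : forall t : 'I_k.+1, Y (iter t Y (iter (k - t) Z G0)) q w = X t.+1.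
  by move=> t.
have e2 : forall t : 'I_k.+1, Z (iter t Y (iter (k - t) Z G0)) q w = X t.
  move=> t; rewrite /X comm; last by apply: gZi.
  by rewrite subSn // -ltnS.
rewrite (eq_bigr (fun t : 'I_k.+1 => X t.+1 *+ 'C(k, t))); last by move=> t _; rewrite e1.
rewrite [X in _ + X](eq_bigr (fun t : 'I_k.+1 => X t *+ 'C(k, t))); last by move=> t _; rewrite e2.
rewrite [RHS]big_ord_recl /= [in RHS](eq_bigr (fun t : 'I_k.+1 => X t.+1 *+ 'C(k, t) + X t.+1 *+ 'C(k, t.+1))); last first.
  by move=> t _; rewrite /bump /= add0n add1n binS mulrnDr addrC.
rewrite [in RHS]big_split /= [X in _ + X = _]big_ord_recl /= [X in _ = _ + (_ + X)]big_ord_recr /=.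
rewrite (@bin_small k k.+1) // mulr0n addr0 !bin0 !mulr1n.

rewrite addrCA; congr (_ + (_ + _)); apply: eq_bigr => i _; by rewrite /bump.
Qed.

Lemma binom_charp (F : fieldType) (W : lmodType F) (p : nat) (hp : prime p)
  (hc : p \in [pchar F]) (good : (int -> W -> W) -> Prop)
  (Y Z : (int -> W -> W) -> int -> W -> W) (G0 : int -> W -> W) :
  good G0 -> (forall G, good G -> good (Y G)) -> (forall G, good G -> good (Z G)) ->
  (forall n (H : nat -> int -> W -> W) (c : nat -> nat), (forall t, good (H t)) ->
    Y (fun q w => \sum_(t < n) H t q w *+ c t) = fun q w => \sum_(t < n) Y (H t) q w *+ c t) ->
  (forall n (H : nat -> int -> W -> W) (c : nat -> nat), (forall t, good (H t)) ->
    Z (fun q w => \sum_(t < n) H t q w *+ c t) = fun q w => \sum_(t < n) Z (H t) q w *+ c t) ->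
  (forall G, good G -> Y (Z G) = Z (Y G)) ->
  iter p (fun G q w => Y G q w + Z G q w) G0
    = fun q w => iter p Y G0 q w + iter p Z G0 q w.
Proof.
move=> g0 gY gZ Ys Zs YZ; rewrite (binom_ops g0 gY gZ Ys Zs YZ).
apply: functional_extensionality => q; apply: functional_extensionality => w.
rewrite (sum_charp hp hc (fun t => iter t Y (iter (p - t) Z G0) q w)) /=.
by rewrite subn0 subnn addrC.
Qed.

Definition linop (F : fieldType) (W : lmodType F) (f : W -> W) :=
  forall a w w', f (a *: w + w') = a *: f w + f w'.

Lemma linop0 (F : fieldType) (W : lmodType F) (f : W -> W) : linop f -> f 0 = 0.
Proof.
move=> h; have e := h 1 0 0; rewrite !scale1r addr0 in e.
by apply: (addrI (f 0)); rewrite addr0 -e.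
Qed.

Lemma linopD (F : fieldType) (W : lmodType F) (f : W -> W) : linop f ->
  forall x y, f (x + y) = f x + f y.
Proof. by move=> h x y; have := h 1 x y; rewrite !scale1r. Qed.

Lemma linopZ (F : fieldType) (W : lmodType F) (f : W -> W) : linop f ->
  forall a x, f (a *: x) = a *: f x.
Proof. by move=> h a x; rewrite -[a *: x]addr0 h linop0 // addr0. Qed.

Lemma linopMn (F : fieldType) (W : lmodType F) (f : W -> W) : linop f ->
  forall x n, f (x *+ n) = f x *+ n.
Proof. by move=> h x n; rewrite -!scaler_nat linopZ. Qed.

Lemma linop_sum (F : fieldType) (W : lmodType F) (f : W -> W) : linop f ->
  forall n (x : 'I_n -> W), f (\sum_(t < n) x t) = \sum_(t < n) f (x t).
Proof.
move=> h n x; rewrite (big_morph f (linopD h) (linop0 h)) //.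
Qed.

Definition truncf (W : zmodType) (G : int -> W -> W) :=
  forall w, exists N : nat, forall q, N%:Z <= q -> G q w = 0.

Definition goodf (F : fieldType) (W : lmodType F) (G : int -> W -> W) :=
  (forall q, linop (G q)) /\ truncf G.

Definition Iop (W : zmodType) : int -> W -> W := fun q w => if q == -1 then w else 0.
Definition Lop (W : zmodType) (A G : int -> W -> W) : int -> W -> W :=
  fun q w => isum (fun i : nat => A (-1 - i%:Z) (G (q + i%:Z) w)).
Definition Rop (W : zmodType) (A G : int -> W -> W) : int -> W -> W :=
  fun q w => isum (fun i : nat => G (q - 1 - i%:Z) (A i%:Z w)).

Lemma good_Iop (F : fieldType) (W : lmodType F) : goodf (@Iop W).
Proof.
split; first by move=> q a w w'; rewrite /Iop; case: eqP => // _; rewrite scaler0 addr0.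
by move=> w; exists 0%N => q hq; rewrite /Iop; case: eqP => // e; move: hq; rewrite e.
Qed.

Lemma trunc_shift (W : zmodType) (G : int -> W -> W) (w : W) (N : nat) (q : int) :
  (forall q', N%:Z <= q' -> G q' w = 0) ->
  forall i : nat, (absz (N%:Z - q) <= i)%N -> G (q + i%:Z) w = 0.
Proof. by move=> h i hi; apply: h; lia. Qed.

Lemma good_Lop (F : fieldType) (W : lmodType F) (A : int -> W -> W)
  (Alin : forall n, linop (A n)) (G : int -> W -> W) : goodf G -> goodf (Lop A G).
Proof.
move=> [Glin Gtr]; split.
- move=> q a w w'; rewrite /Lop.
  have [N1 h1] := Gtr w; have [N2 h2] := Gtr w'.
  set M := maxn (absz (N1%:Z - q)) (absz (N2%:Z - q)).
  have z1 : forall i, (M <= i)%N -> A (-1 - i%:Z) (G (q + i%:Z) w) = 0.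
    move=> i hi; rewrite (trunc_shift h1) ?linop0 //; apply: leq_trans hi; exact: leq_maxl.
  have z2 : forall i, (M <= i)%N -> A (-1 - i%:Z) (G (q + i%:Z) w') = 0.
    move=> i hi; rewrite (trunc_shift h2) ?linop0 //; apply: leq_trans hi; exact: leq_maxr.
  rewrite (isumE z1) (isumE z2) (@isumE _ _ M); last first.
    by move=> i hi; rewrite Glin Alin (z1 _ hi) (z2 _ hi) scaler0 addr0.
  by rewrite scaler_sumr -big_split; apply: eq_bigr => i _; rewrite Glin Alin.
- move=> w; have [N hN] := Gtr w; exists N => q hq; rewrite /Lop isum0 // => i.
  by rewrite hN ?linop0 //; lia.
Qed.

Lemma good_Rop (F : fieldType) (W : lmodType F) (A : int -> W -> W)
  (Alin : forall n, linop (A n)) (Atr : truncf A) (G : int -> W -> W) :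
  goodf G -> goodf (Rop A G).
Proof.
move=> [Glin Gtr]; split.
- move=> q a w w'; rewrite /Rop.
  have [N1 h1] := Atr w; have [N2 h2] := Atr w'.
  set M := maxn N1 N2.
  have z1 : forall i, (M <= i)%N -> G (q - 1 - i%:Z) (A i%:Z w) = 0.
    move=> i hi; rewrite h1 ?linop0 //; have := leq_maxl N1 N2; rewrite -/M; lia.
  have z2 : forall i, (M <= i)%N -> G (q - 1 - i%:Z) (A i%:Z w') = 0.
    move=> i hi; rewrite h2 ?linop0 //; have := leq_maxr N1 N2; rewrite -/M; lia.
  rewrite (isumE z1) (isumE z2) (@isumE _ _ M); last first.
    by move=> i hi; rewrite Alin Glin (z1 _ hi) (z2 _ hi) scaler0 addr0.
  by rewrite scaler_sumr -big_split; apply: eq_bigr => i _; rewrite Alin Glin.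
- move=> w; have [NA hA] := Atr w.
  have [M hM] := @bound_fam NA (fun t N => forall q, N%:Z <= q -> G q (A t%:Z w) = 0)
     (fun t N N' h hN q hq => h q (ltac:(lia))) (fun t _ => Gtr (A t%:Z w)).
  exists (M + NA)%N => q hq; rewrite /Rop (@isumE _ _ NA).
    by rewrite big1 // => i _; apply: (hM i (ltn_ord i)); have := ltn_ord i; lia.
  by move=> i hi; rewrite hA ?linop0 //; lia.
Qed.

Lemma Lop_sum (F : fieldType) (W : lmodType F) (A : int -> W -> W)
  (Alin : forall n, linop (A n)) n (H : nat -> int -> W -> W) (c : nat -> nat) :
  (forall t, goodf (H t)) ->
  Lop A (fun q w => \sum_(t < n) H t q w *+ c t) = fun q w => \sum_(t < n) Lop A (H t) q w *+ c t.
Proof.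
move=> gH; apply: functional_extensionality => q; apply: functional_extensionality => w.
rewrite /Lop.
have [M hM] := @bound_fam n (fun t N => forall i, (N <= i)%N -> H t (q + i%:Z) w = 0)
  (fun t N N' h hN i hi => h i (leq_trans hN hi))
  (fun t _ => let: ex_intro N hN := (gH t).2 w in ex_intro _ _ (trunc_shift hN)).
rewrite (@isumE _ _ M); last first.
  by move=> i hi; rewrite big1 ?linop0 // => t _; rewrite (hM t (ltn_ord t) i hi) mul0rn.
transitivity (\sum_(t < n) (\sum_(i < M) A (-1 - i%:Z) (H t (q + i%:Z) w)) *+ c t).
  rewrite (eq_bigr (fun i : 'I_M => \sum_(t < n) A (-1 - i%:Z) (H t (q + i%:Z) w) *+ c t)); last first.
    by move=> i _; rewrite linop_sum //; apply: eq_bigr => t _; rewrite linopMn.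
  rewrite exchange_big /=; apply: eq_bigr => t _; by rewrite sumrMnl.
apply: eq_bigr => t _; rewrite (@isumE _ _ M) // => i hi.
by rewrite (hM t (ltn_ord t) i hi) linop0.
Qed.

Lemma Rop_sum (F : fieldType) (W : lmodType F) (A : int -> W -> W)
  (Alin : forall n, linop (A n)) (Atr : truncf A) n (H : nat -> int -> W -> W) (c : nat -> nat) :
  (forall t, goodf (H t)) ->
  Rop A (fun q w => \sum_(t < n) H t q w *+ c t) = fun q w => \sum_(t < n) Rop A (H t) q w *+ c t.
Proof.
move=> gH; apply: functional_extensionality => q; apply: functional_extensionality => w.
rewrite /Rop; have [NA hA] := Atr w.
rewrite (@isumE _ _ NA); last first.
  move=> i hi; rewrite big1 // => t _; rewrite hA; last by lia.
  by rewrite linop0 ?mul0rn //; apply: (gH t).1.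
rewrite exchange_big /=; apply: eq_bigr => t _.
rewrite (@isumE _ _ NA) ?sumrMnl // => i hi.
rewrite hA; last by lia.
by rewrite linop0 //; apply: (gH t).1.
Qed.

Lemma Lop_Rop (F : fieldType) (W : lmodType F) (A : int -> W -> W)
  (Alin : forall n, linop (A n)) (Atr : truncf A) (G : int -> W -> W) :
  goodf G -> Lop A (Rop A G) = Rop A (Lop A G).
Proof.
move=> gG; have [Glin Gtr] := gG.
apply: functional_extensionality => q; apply: functional_extensionality => w.
have [NA hA] := Atr w.
have [M hM] := @bound_fam NA (fun t N => forall q', N%:Z <= q' -> G q' (A t%:Z w) = 0)
     (fun t N N' h hN q hq => h q (ltac:(lia))) (fun t _ => Gtr (A t%:Z w)).
set K := (absz (M%:Z - q) + NA + 1)%N.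
have z : forall (i k : nat), (i < NA)%N -> (K <= k)%N -> G (q + k%:Z - 1 - i%:Z) (A i%:Z w) = 0.
  by move=> i k hi hk; apply: (hM i hi); rewrite /K in hk; lia.
rewrite /Lop /Rop.
have e1 : (fun k : nat => A (-1 - k%:Z) (isum (fun i : nat => G (q + k%:Z - 1 - i%:Z) (A i%:Z w))))
  = (fun k : nat => A (-1 - k%:Z) (\sum_(i < NA) G (q + k%:Z - 1 - i%:Z) (A i%:Z w))).
  apply: functional_extensionality => k; rewrite (@isumE _ _ NA) // => i hi.
  by rewrite hA ?linop0 //; lia.
rewrite e1 (@isumE _ _ K); last first.
  by move=> k hk; rewrite big1 ?linop0 // => i _; apply: z.
rewrite (@isumE _ _ NA); last first.
  move=> i hi; rewrite isum0 // => k; rewrite hA; last by lia.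
  by rewrite !linop0.
rewrite (eq_bigr (fun k : 'I_K => \sum_(i < NA) A (-1 - k%:Z) (G (q + k%:Z - 1 - i%:Z) (A i%:Z w)))); last first.
  by move=> k _; rewrite linop_sum.
rewrite exchange_big /=; apply: eq_bigr => i _.
rewrite (@isumE _ _ K); last first.
  move=> k hk; have e : q - 1 - i%:Z + k%:Z = q + k%:Z - 1 - i%:Z by lia.
  by rewrite e z ?linop0.
apply: eq_bigr => k _; have e : q - 1 - i%:Z + k%:Z = q + k%:Z - 1 - i%:Z by lia.
by rewrite e.
Qed.

Definition Rsing (W : zmodType) (A : int -> W -> W) (m : nat) (G : int -> W -> W) : int -> W -> W :=
  fun q w => G (q - 1 - m%:Z) (A m%:Z w).
Definition RopN (W : zmodType) (A : int -> W -> W) (N : nat) (G : int -> W -> W) : int -> W -> W :=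
  fun q w => \sum_(i < N) G (q - 1 - i%:Z) (A i%:Z w).
Definition Lsing (W : zmodType) (A : int -> W -> W) (i : nat) (G : int -> W -> W) : int -> W -> W :=
  fun q w => A (-1 - i%:Z) (G (q + i%:Z) w).
Definition LopN (W : zmodType) (A : int -> W -> W) (N : nat) (G : int -> W -> W) : int -> W -> W :=
  fun q w => \sum_(i < N) A (-1 - i%:Z) (G (q + i%:Z) w).

Lemma RopN_pow (F : fieldType) (W : lmodType F) (p : nat) (hp : prime p)
  (hc : p \in [pchar F]) (A : int -> W -> W)
  (AcP : forall (m n : nat) w, A m%:Z (A n%:Z w) = A n%:Z (A m%:Z w)) :
  forall N, iter p (RopN A N) (@Iop W) = fun q w => \sum_(m < N) iter p (Rsing A m) (@Iop W) q w.
Proof.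
elim=> [|N IH].
  case: p hp hc => [//|p] _ _ /=.
  apply: functional_extensionality => q; apply: functional_extensionality => w.
  by rewrite /RopN !big_ord0.
have e : RopN A N.+1 = fun G q w => RopN A N G q w + Rsing A N G q w.
  apply: functional_extensionality => G; apply: functional_extensionality => q.
  by apply: functional_extensionality => w; rewrite /RopN big_ord_recr.
rewrite e (@binom_charp F W p hp hc (fun _ => True)) //.
- rewrite IH; apply: functional_extensionality => q; apply: functional_extensionality => w.
  by rewrite big_ord_recr.
- move=> n H c _; apply: functional_extensionality => q; apply: functional_extensionality => w.
  rewrite /RopN exchange_big /=; apply: eq_bigr => t _; by rewrite sumrMnl.
- move=> G _; apply: functional_extensionality => q; apply: functional_extensionality => w.
  rewrite /RopN /Rsing; apply: eq_bigr => i _; rewrite AcP; congr (G _ _); lia.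
Qed.

Lemma LopN_pow (F : fieldType) (W : lmodType F) (p : nat) (hp : prime p)
  (hc : p \in [pchar F]) (A : int -> W -> W) (Alin : forall n, linop (A n))
  (AcN : forall (m n : nat) w, A (-1 - m%:Z) (A (-1 - n%:Z) w) = A (-1 - n%:Z) (A (-1 - m%:Z) w)) :
  forall N, iter p (LopN A N) (@Iop W) = fun q w => \sum_(m < N) iter p (Lsing A m) (@Iop W) q w.
Proof.
elim=> [|N IH].
  case: p hp hc => [//|p] _ _ /=.
  apply: functional_extensionality => q; apply: functional_extensionality => w.
  by rewrite /LopN !big_ord0.
have e : LopN A N.+1 = fun G q w => LopN A N G q w + Lsing A N G q w.
  apply: functional_extensionality => G; apply: functional_extensionality => q.
  by apply: functional_extensionality => w; rewrite /LopN big_ord_recr.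
rewrite e (@binom_charp F W p hp hc (fun _ => True)) //.
- rewrite IH; apply: functional_extensionality => q; apply: functional_extensionality => w.
  by rewrite big_ord_recr.
- move=> n H c _; apply: functional_extensionality => q; apply: functional_extensionality => w.
  rewrite /LopN (eq_bigr (fun i : 'I_N => \sum_(t < n) A (-1 - i%:Z) (H t (q + i%:Z) w) *+ c t)); last first.
    by move=> i _; rewrite (linop_sum (Alin _)); apply: eq_bigr => t _; rewrite (linopMn (Alin _)).
  rewrite exchange_big /=; apply: eq_bigr => t _; by rewrite sumrMnl.
- move=> n H c _; apply: functional_extensionality => q; apply: functional_extensionality => w.
  rewrite /Lsing (linop_sum (Alin _)); apply: eq_bigr => t _; by rewrite (linopMn (Alin _)).
- move=> G _; apply: functional_extensionality => q; apply: functional_extensionality => w.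
  rewrite /LopN /Lsing (linop_sum (Alin _)); apply: eq_bigr => i _; rewrite AcN.
  congr (A _ (A _ (G _ _))); lia.
Qed.

Lemma iter_Rsing (W : zmodType) (A : int -> W -> W) (m : nat) :
  forall k q w, iter k (Rsing A m) (@Iop W) q w = Iop (q - k%:Z * (1 + m%:Z)) (iter k (A m%:Z) w).
Proof.
elim=> [|k IH] q w; first by rewrite /= mul0r subr0.
rewrite iterS /Rsing IH iterSr; congr (Iop _ _); nia.
Qed.

Lemma iter_Lsing (W : zmodType) (A : int -> W -> W) (i : nat) :
  forall k q w, iter k (Lsing A i) (@Iop W) q w = iter k (A (-1 - i%:Z)) (Iop (q + k%:Z * i%:Z) w).
Proof.
elim=> [|k IH] q w; first by rewrite /= mul0r addr0.
rewrite iterS /Lsing IH iterS; congr (A _ (iter _ _ (Iop _ _))); nia.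
Qed.

Lemma good_iter (F : fieldType) (W : lmodType F) (Op : (int -> W -> W) -> int -> W -> W) :
  (forall G, goodf G -> goodf (Op G)) -> forall k, goodf (iter k Op (@Iop W)).
Proof. by move=> h; elim=> [|k IH] /=; [apply: good_Iop | apply: h]. Qed.

Lemma Rop_RopN (F : fieldType) (W : lmodType F) (A : int -> W -> W)
  (Alin : forall n, linop (A n)) (Atr : truncf A)
  (AcP : forall (m n : nat) w, A m%:Z (A n%:Z w) = A n%:Z (A m%:Z w)) (N : nat) :
  forall k q v, (forall m : nat, (N <= m)%N -> A m%:Z v = 0) ->
  iter k (Rop A) (@Iop W) q v = iter k (RopN A N) (@Iop W) q v.
Proof.
elim=> [|k IH] q v hv //.
rewrite !iterS {1}/Rop (@isumE _ _ N); last first.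
  move=> i hi; rewrite hv // linop0 //; exact: (good_iter (good_Rop Alin Atr) k).1.
rewrite /RopN; apply: eq_bigr => i _; apply: IH => m hm.
by rewrite AcP hv // linop0.
Qed.

Lemma Lop_vanish (F : fieldType) (W : lmodType F) (A : int -> W -> W)
  (Alin : forall n, linop (A n)) :
  forall k q w, 0 <= q -> iter k (Lop A) (@Iop W) q w = 0.
Proof.
elim=> [|k IH] q w hq /=; first by rewrite /Iop; case: eqP => // e; move: hq; rewrite e.
rewrite /Lop isum0 // => i; rewrite IH ?linop0 //; lia.
Qed.

Lemma Lop_LopN (F : fieldType) (W : lmodType F) (A : int -> W -> W)
  (Alin : forall n, linop (A n)) (N : nat) :
  forall k q w, - q <= N%:Z ->
  iter k (Lop A) (@Iop W) q w = iter k (LopN A N) (@Iop W) q w.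
Proof.
elim=> [|k IH] q w hq //.
rewrite !iterS {1}/Lop (@isumE _ _ N); last first.
  by move=> i hi; rewrite Lop_vanish ?linop0 //; lia.
rewrite /LopN; apply: eq_bigr => i _; rewrite IH //; lia.
Qed.

Lemma Rop_vanish (F : fieldType) (W : lmodType F) (A : int -> W -> W)
  (Alin : forall n, linop (A n)) (Atr : truncf A) :
  forall k q w, q + 1 < k%:Z -> iter k (Rop A) (@Iop W) q w = 0.
Proof.
elim=> [|k IH] q w hq /=; first by rewrite /Iop; case: eqP => // e; move: hq; rewrite e.
rewrite /Rop isum0 // => i; rewrite IH //; lia.
Qed.

Lemma iter_linop0 (F : fieldType) (W : lmodType F) (f : W -> W) :
  linop f -> forall k, iter k f 0 = 0.
Proof. by move=> h; elim=> [|k IH] //=; rewrite IH linop0. Qed.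

Lemma Rpow_eval (F : fieldType) (W : lmodType F) (p : nat) (hp : prime p)
  (hc : p \in [pchar F]) (A : int -> W -> W)
  (Alin : forall n, linop (A n)) (Atr : truncf A)
  (AcP : forall (m n : nat) w, A m%:Z (A n%:Z w) = A n%:Z (A m%:Z w)) (n : nat) (w : W) :
  iter p (Rop A) (@Iop W) (p%:Z * (n%:Z + 1) - 1) w = iter p (A n%:Z) w.
Proof.
have p0 := prime_gt0 hp.
have [NA hA] := Atr w.
set N := maxn NA n.+1.
rewrite (@Rop_RopN _ _ _ Alin Atr AcP N); last first.
  by move=> m hm; apply: hA; have := leq_maxl NA n.+1; rewrite -/N; lia.
rewrite (RopN_pow hp hc AcP).
have hn : (n < N)%N by have := leq_maxr NA n.+1; rewrite -/N; lia.
rewrite (bigD1 (Ordinal hn)) //= big1 ?addr0.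
  rewrite iter_Rsing /Iop; case: eqP => // e; exfalso; apply: e; lia.
move=> m hm; rewrite iter_Rsing /Iop; case: eqP => // e; exfalso.
move/eqP: hm; apply; apply: val_inj => /=; nia.
Qed.

Lemma Lpow_eval (F : fieldType) (W : lmodType F) (p : nat) (hp : prime p)
  (hc : p \in [pchar F]) (A : int -> W -> W) (Alin : forall n, linop (A n))
  (AcN : forall (m n : nat) w, A (-1 - m%:Z) (A (-1 - n%:Z) w) = A (-1 - n%:Z) (A (-1 - m%:Z) w))
  (i : nat) (w : W) :
  iter p (Lop A) (@Iop W) (- p%:Z * i%:Z - 1) w = iter p (A (-1 - i%:Z)) w.
Proof.
have p0 := prime_gt0 hp.
set N := (p * i).+1.
rewrite (@Lop_LopN _ _ _ Alin N); last by rewrite /N; lia.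
rewrite (LopN_pow hp hc Alin AcN).
have hn : (i < N)%N by rewrite /N; nia.
rewrite (bigD1 (Ordinal hn)) //= big1 ?addr0.
  rewrite iter_Lsing /Iop; case: eqP => // e; exfalso; apply: e; lia.
move=> m hm; rewrite iter_Lsing /Iop; case: eqP => e; last by rewrite iter_linop0.
exfalso; move/eqP: hm; apply; apply: val_inj => /=; nia.
Qed.

Lemma binp_one (F : fieldType) (p : nat) (hp : prime p) (hc : p \in [pchar F]) :
  forall r, ('C(p.-1 + p * r, p.-1))%:R = 1 :> F.
Proof.
elim=> [|r IH]; first by rewrite muln0 addn0 binn.
have e : (p.-1 + p * r.+1 = p + (p.-1 + p * r))%N by rewrite mulnS; lia.
rewrite e -binomial.Vandermonde natr_sum big_ord_recl /= bin0 mul1n subn0 IH.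
rewrite big1 ?addr0 // => i _; rewrite natrM bin_lt_pcharf_0 ?mul0r //.
have := ltn_ord i; have := prime_gt0 hp; rewrite /bump /=; lia.
Qed.

Lemma binp_ne0 (F : fieldType) (p : nat) (hp : prime p) (hc : p \in [pchar F]) (r : nat) :
  ('C(p.-1 + p * r, p * r))%:R != 0 :> F.
Proof.
rewrite -{2}(addKn p.-1 (p * r)%N) bin_sub ?leq_addr // binp_one ?oner_neq0 //.
Qed.

Definition lin2 (F : fieldType) (U W : lmodType F) (f : U -> W) :=
  forall a x y, f (a *: x + y) = a *: f x + f y.

Lemma lin2_0 (F : fieldType) (U W : lmodType F) (f : U -> W) : lin2 f -> f 0 = 0.
Proof.
move=> h; have e := h 1 0 0; rewrite !scale1r addr0 in e.
by apply: (addrI (f 0)); rewrite addr0 -e.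
Qed.

Lemma lin2Z (F : fieldType) (U W : lmodType F) (f : U -> W) : lin2 f ->
  forall a x, f (a *: x) = a *: f x.
Proof. by move=> h a x; rewrite -[a *: x]addr0 h lin2_0 // addr0. Qed.

Lemma lin2B (F : fieldType) (U W : lmodType F) (f : U -> W) : lin2 f ->
  forall x y, f (x - y) = f x - f y.
Proof.
move=> h x y; rewrite -scaleN1r addrC h addrC scaleN1r; congr (_ + _).
Qed.

Lemma zbinom0 (m : int) : zbinom m 0 = 1.
Proof. by case: m => n /=; rewrite ?bin0 // expr0 mul1r. Qed.

Lemma zbinom0S (i : nat) : zbinom 0 i.+1 = 0.
Proof. by rewrite /zbinom /= bin0n. Qed.

Lemma zbinom1 (m : int) : zbinom m 1 = m.
Proof. by case: m => n /=; rewrite ?bin1 // expr1 NegzE addn1 mulN1r. Qed.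

Lemma zbinomN1 (i : nat) : zbinom (-1) i = (-1) ^+ i.
Proof. by rewrite /zbinom /= add0n binn mulr1. Qed.

Lemma sum_single (W : zmodType) n (f : 'I_n -> W) (j : 'I_n) :
  (forall i : 'I_n, (i : nat) != j -> f i = 0) -> \sum_(i < n) f i = f j.
Proof.
by move=> h; rewrite (bigD1 j) //= big1 ?addr0 // => i hi; apply: h.
Qed.

Theorem proposition5
  (F : fieldType) (p : nat) (hp : prime p) (hchar : p \in [pchar F])
  (h : vectType F) (form : h -> h -> F) (hform : nondeg_symform form)
  (ell : F)
  (lam : nat -> h -> F)
  (hlam : forall (n : nat) (a : F) (u v : h), (0 < n)%N ->
            lam n (a *: u + v) = a * lam n u + lam n v)
  (hLam : forall (n : nat) (u : h), (2 <= n)%N -> lam n u = 0)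
  (V : lmodType F) (vac : V) (Y : V -> int -> V -> V) (iota : h -> V)
  (hV : is_heisenberg_VA form ell vac Y iota)
  (L : lmodType F) (vacL : L) (YL : L -> int -> L -> L) (pi : V -> L)
  (hL : is_va_quotient vac Y vacL YL pi
          (in_J p lam vac (fun u n => Y (iota u) n)))
  (W : lmodType F) (YW : L -> int -> W -> W) (hW : is_va_module vacL YL YW) :
  let act := fun (u : h) (n : int) => YW (pi (iota u)) n in
  [/\ heis_module form ell act,
      restricted act,
      (forall (u : h) (n : int) (w : W), (p%:Z %| n)%Z -> act u n w = 0),
      (forall (u : h) (n : int) (w : W), n != -1 -> iter p (act u n) w = 0) &
      (forall (u : h) (w : W), iter p (act u (-1)) w = (lam 1%N u) ^+ p *: w)].
Proof.
move=> act.
case: hV => hVA hiota hheisV _.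
case: hVA => [[Ylin1 Ylin2] Ytr Yvac Ycre Yjac].
case: hL => _ [pilin [_ [pivac [pihom piJ]]]].
case: hW => [[YW1 YW2] YWtr YWvac YWjac].
case: hheisV => hYu1 hYu2 hYuc.
have Y0 : forall x n, Y x n 0 = 0 by move=> x n; apply: linop0 => a w w'; apply: Ylin2.
have iota_lin : forall a u v, iota (a *: u + v) = a *: iota u + iota v.
  by move=> a u v; rewrite hiota hYu1 -!hiota.
have pil : lin2 pi by [].
have YWl : forall n w, lin2 (fun x => YW x n w) by move=> n w a x y; apply: YW1.
have YW0 : forall n w, YW 0 n w = 0 by move=> n w; exact: (lin2_0 (YWl n w)).
have Alin : forall u n, linop (act u n) by move=> u n a w w'; apply: YW2.
have Atr : forall u, truncf (act u).
  by move=> u w; have [N hN] := YWtr (pi (iota u)) w; exists (absz N) => q hq; apply: hN; lia.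
have heis : heis_module form ell act.
  split.
  - by move=> a u v n w; rewrite /act iota_lin pil YW1.
  - by move=> u n a w w'; apply: YW2.
  move=> u v m n w.
  have Yuv : forall i : nat, Y (iota u) i%:Z (iota v) = (if i == 1%N then form u v * ell else 0) *: vac.
    move=> i; have := hYuc u v i%:Z (-1) vac.
    rewrite -hiota (Ycre _).2 // Y0 subr0 => ->; congr (_ *: _).
    have [->|ne] := eqVneq i 1%N; first by rewrite (_ : (_ - _ == 0) = true) // (_ : 1%Z%:~R = 1 :> F) ?mul1r.
    by rewrite ifF //; apply/negbTE; lia.
  have [N hN] := YWjac (pi (iota u)) (pi (iota v)) w m n 0.
  have := hN N.+2 (leq_trans (leqnSn N) (leqnSn _)).
  rewrite [X in _ = X -> _]big_ord_recl [X in _ = _ + X -> _]big1; last first.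
    by move=> i _; rewrite lift0 zbinom0S mulr0 scale0r.
  have z1 : forall x : int, x + 0 - 0%Z = x by move=> x; lia.
  have z2 : forall x : int, x + 0%Z = x by move=> x; lia.
  rewrite addr0 /= expr0 bin0 mul1r (_ : 1%Z%:~R = 1 :> F) // scale1r expr0z scale1r !z1 !z2.
  rewrite (bigD1 (@Ordinal N.+2 1 isT)) //= big1 ?addr0; last first.
    move=> i hi; rewrite add0r -pihom Yuv ifF ?scale0r ?(lin2_0 pil) ?YW0 ?scaler0 //.
    by apply/negbTE; move: hi; apply: contra => /eqP e; apply/eqP; apply: val_inj.
  rewrite zbinom1 add0r -pihom Yuv /= (lin2Z pil) pivac (lin2Z (YWl _ _)) YWvac.
  rewrite /act => <-.
  case: ifP => /eqP h1; case: ifP => /eqP h2.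
  - by rewrite scalerA mulrA.
  - by exfalso; apply: h2; lia.
  - by exfalso; apply: h1; lia.
  - by rewrite !scaler0 scale0r.
have hcomm := heis; case: hcomm => _ _ hcomm.
have AcP : forall u (m n : nat) w, act u m%:Z (act u n%:Z w) = act u n%:Z (act u m%:Z w).
  move=> u m n w; have := hcomm u u m%:Z n%:Z w; move/eqP; rewrite subr_eq => /eqP ->.
  case: ifP => [/eqP e|_]; last by rewrite scale0r add0r.
  have -> : m = 0%N by lia.
  by rewrite mulr0z !mul0r scale0r add0r.
have AcN : forall u (m n : nat) w, act u (-1 - m%:Z) (act u (-1 - n%:Z) w)
    = act u (-1 - n%:Z) (act u (-1 - m%:Z) w).
  move=> u m n w; have := hcomm u u (-1 - m%:Z) (-1 - n%:Z) w; move/eqP; rewrite subr_eq => /eqP ->.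
  by rewrite ifF ?scale0r ?add0r //; apply/negbTE; lia.
have p2 := prime_gt1 hp.
have Jgen : forall u (m : nat), (0 < m)%N -> YL (pi (iota u)) (- ((p * m)%N)%:Z) vacL = 0.
  move=> u m hm.
  have : in_J p lam vac (fun u n => Y (iota u) n)
     (Y (iota u) (- ((p * m)%N)%:Z) vac - lam (p * m)%N u *: vac).
    move=> P _ _ _ h4 _; apply: h4; [by rewrite muln_gt0 prime_gt0 | exact: dvdn_mulr].
  move/piJ; rewrite hLam; last by nia.
  by rewrite scale0r subr0 pihom pivac.
have Jv : forall u (k n' : int) w, YL (pi (iota u)) k vacL = 0 -> exists N : nat, forall M : nat, (N <= M)%N ->
   0 = \sum_(i < M) ((-1) ^+ i * (zbinom k i)%:~R : F) *:
        (YW (pi (iota u)) (0 + k - (i : nat)%:Z) (YW vacL (n' + (i : nat)%:Z) w)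
         - ((-1) ^ k : F) *: YW vacL (n' + k - (i : nat)%:Z) (YW (pi (iota u)) (0 + (i : nat)%:Z) w)).
  move=> u k n' w hk; have [N hN] := YWjac (pi (iota u)) vacL w 0 n' k.
  exists N => M hM; rewrite -(hN M hM) big1 // => -[[|i] hi] _ /=.
    by rewrite addr0 hk YW0 scaler0.
  by rewrite bin_small // mulr0z scale0r.
have YWv : forall j x, YW vacL j x = if j == -1 then x else 0.
  by move=> j x; apply: YWvac.
have YWc0 : forall u n, YW (pi (iota u)) n 0 = 0 := fun u n => linop0 (Alin u n).
have part3 : forall (u : h) (n : int) (w : W), (p%:Z %| n)%Z -> act u n w = 0.
  move=> u n w /dvdzP [[r|r] ->].
  - set Nn := (r * p)%N.
    have e : r%:Z * p%:Z = Nn%:Z by rewrite /Nn PoszM.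
    rewrite e.
    have [N hN] := Jv u (- ((p*1)%N)%:Z) (Nn%:Z + p%:Z - 1) w (Jgen u 1%N isT).
    have hNM : (Nn < (N + Nn).+1)%N by lia.
    have := hN (N + Nn).+1 ltac:(lia).
    rewrite (@sum_single _ _ _ (Ordinal hNM)); last first.
      move=> i /= hi; rewrite !YWv; case: ifP => [/eqP ?|_]; first by exfalso; move: hi; lia.
      case: ifP => [/eqP ?|_]; first by exfalso; move: hi; lia.
      by rewrite YWc0 scaler0 subr0 scaler0.
    rewrite /= !YWv ifF; last by apply/negbTE; lia.
    rewrite ifT; last by apply/eqP; lia.
    rewrite YWc0 !add0r => /eqP; rewrite eq_sym scaler_eq0 => /orP [c0|].
      exfalso; move: c0; apply/negP.
      have -> : - ((p * 1)%N)%:Z = Negz p.-1 by rewrite NegzE prednK ?muln1 // prime_gt0.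
      rewrite /zbinom intrM intr_sign -pmulrn mulf_neq0 ?signr_eq0 //.
      by rewrite mulf_eq0 signr_eq0 /= /Nn mulnC binp_ne0.
    by rewrite oppr_eq0 scaler_eq0 expfz_eq0 !oppr_eq0 oner_eq0 andbF /= => /eqP H; exact: H.
  - set k := - ((p * r.+1)%N)%:Z.
    have e : Negz r * p%:Z = k by rewrite /k NegzE mulNr -PoszM mulnC.
    rewrite e.
    have [N hN] := Jv u k (-1) w (Jgen u r.+1 isT).
    have := hN N.+1 (leqnSn N).
    rewrite (@sum_single _ _ _ (@Ordinal N.+1 0 isT)); last first.
      move=> i /= hi; rewrite !YWv; case: ifP => [/eqP ?|_]; first by exfalso; move: hi; rewrite /k; lia.
      case: ifP => [/eqP ?|_]; first by exfalso; move: hi; rewrite /k; lia.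
      by rewrite YWc0 scaler0 subr0 scaler0.
    rewrite /= !YWv (_ : (-1 + 0%Z == -1 :> int) = true) //.
    rewrite (_ : (-1 + k - 0%Z == -1 :> int) = false); last by apply/negbTE; rewrite /k; lia.
    rewrite scaler0 subr0 expr0 zbinom0 mul1r (_ : 1%:~R = 1 :> F) // scale1r.
    have -> : 0 + k - 0%Z = k by lia.
    by move=> ->.
have part45 : forall u, (forall n w, n != -1 -> iter p (act u n) w = 0) /\
    (forall w, iter p (act u (-1)) w = lam 1%N u ^+ p *: w).
  move=> u.
  pose v := fun j => iter j (Y (iota u) (-1)) vac.
  pose B := fun j q w => YW (pi (v j)) q w.
  have B0 : B 0%N = @Iop W.
    apply: functional_extensionality => q; apply: functional_extensionality => w.
    by rewrite /B /= pivac YWv.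
  have m1 : ((-1 : F) ^ (-1 : int)) = -1 by rewrite /exprz /= expr1 invrN1.
  have BS : forall j, B j.+1 = fun q w => Lop (act u) (B j) q w + Rop (act u) (B j) q w.
    move=> j; apply: functional_extensionality => q; apply: functional_extensionality => w.
    have [N hN] := YWjac (pi (iota u)) (pi (v j)) w 0 q (-1).
    have [Nb hb] := YWtr (pi (v j)) w.
    have [NA hA] := Atr u w.
    set M := (N + absz (Nb - q) + NA).+1.
    have := hN M ltac:(lia).
    rewrite big_ord_recl big1 ?addr0 => [|i _]; last by rewrite lift0 zbinom0S mulr0z scale0r.
    rewrite zbinom0 (_ : 1%:~R = 1 :> F) // scale1r add0r -pihom => H.
    transitivity (YW (pi (Y (iota u) (-1) (v j))) q w); first by [].
    have YWx0 : forall x n, YW x n 0 = 0 := fun x n => linop0 (fun a w w' => YW2 x n a w w').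
    rewrite H /Lop /Rop (@isumE' _ _ M M); first last.
    - by [].
    - by move=> i hi; rewrite /B hb; [exact: YWc0 | move: hi; rewrite /M; lia].
    rewrite (@isumE' _ _ M M); first last.
    - by [].
    - by move=> i hi; rewrite /B hA ?YWx0 //; move: hi; rewrite /M; lia.
    rewrite -big_split; apply: eq_bigr => i _.
    rewrite zbinomN1 intr_sign -exprMn mulrNN mulr1 expr1n scale1r m1 scaleN1r opprK add0r.
    by rewrite (_ : 0 - 1 - i%:Z = -1 - i%:Z) //; lia.
  have Be : B = fun j => iter j (fun G q w => Lop (act u) G q w + Rop (act u) G q w) (@Iop W).
    apply: functional_extensionality => j; elim: j => [|j IH] //.
    by rewrite BS IH.
  have Bp : B p = fun q w => iter p (Lop (act u)) (@Iop W) q w + iter p (Rop (act u)) (@Iop W) q w.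
    rewrite Be; apply: (binom_charp hp hchar (good := @goodf F W)).
    - exact: good_Iop.
    - by move=> G; apply: good_Lop.
    - by move=> G; apply: good_Rop.
    - by move=> n H c hH; apply: Lop_sum.
    - by move=> n H c hH; apply: Rop_sum.
    - by move=> G hG; apply: Lop_Rop.
  have piv : pi (v p) = lam 1%N u ^+ p *: vacL.
    have : in_J p lam vac (fun u n => Y (iota u) n) (v p - lam 1%N u ^+ p *: vac).
      by move=> P _ _ h3 _ _; exact: (h3 u 1%N isT).
    move/piJ; rewrite (lin2B pil) (lin2Z pil) pivac => /eqP; rewrite subr_eq0 => /eqP.
    by [].
  have Bpv : forall q w, B p q w = lam 1%N u ^+ p *: (if q == -1 then w else 0).
    by move=> q w; rewrite /B piv (lin2Z (YWl _ _)) YWv.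
  split.
  - move=> [n0|n0] w hn.
    + have := Bpv (p%:Z * (n0%:Z + 1) - 1) w.
      rewrite Bp Lop_vanish //; last by lia.
      rewrite add0r (Rpow_eval hp hchar (Alin u) (Atr u) (AcP u)) ifF ?scaler0 //.
      by apply/negbTE; lia.
    + have n0pos : (0 < n0)%N by move: hn; rewrite NegzE; lia.
      have := Bpv (- p%:Z * n0%:Z - 1) w.
      rewrite Bp (Rop_vanish (Alin u) (Atr u)); last by nia.
      rewrite addr0 (Lpow_eval hp hchar (Alin u) (AcN u)) ifF ?scaler0; last by apply/negbTE; nia.
      by rewrite (_ : Negz n0 = -1 - n0%:Z) //; rewrite NegzE; lia.
  - move=> w; have := Bpv (- p%:Z * 0%N%:Z - 1) w.
    rewrite Bp (Rop_vanish (Alin u) (Atr u)); last by lia.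
    rewrite addr0 (Lpow_eval hp hchar (Alin u) (AcN u)) ifT; last by apply/eqP; lia.
    by rewrite (_ : -1 - 0%N%:Z = -1).
split=> //.
- by move=> u w; apply: YWtr.
- by move=> u n w hn; apply: (part45 u).1.
- by move=> u w; apply: (part45 u).2.
Qed.
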